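(* Let $p$ be a prime and $b,c\in\mathbb{Q}_p$ with $|c|_p=1$ and $|b|_p<1$, and let $f(x)=\frac{x}{bx+c}$. Let $S_1(0)=\{x\in\mathbb{Q}_p:|x|_p=1\}$. For every $a\in\mathbb{Q}_p$ and every positive integer $l$ such that the ball $U_{p^{-l}}(a)=\{x\in\mathbb{Q}_p:|x-a|_p\le p^{-l}\}$ is contained in $S_1(0)$, we have $$f(U_{p^{-l}}(a))=U_{p^{-l}}(f(a)).$$
   Context: $\mathbb{Q}_p$ is the field of $p$-adic numbers with norm $|\cdot|_p$. *)

(* Defs.v *)
From HB Require Import structures.
From mathcomp Require Import all_boot all_order all_algebra.
From mathcomp Require Import boolp classical_sets reals.
Set Implicit Arguments. Unset Strict Implicit. Unset Printing Implicit Defensive.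
Import Order.TTheory GRing.Theory Num.Theory.
Local Open Scope ring_scope.

Definition rat_padic_abs (R : realType) (p : nat) (q : rat) : R :=
  if q == 0 then 0
  else (p%:R : R) ^ ((logn p `|denq q|)%:Z - (logn p `|numq q|)%:Z).

(* [is_Qp p nv] : the field K together with nv : K -> R is (a model of) the
   field Q_p of p-adic numbers, i.e. a completion of Q with respect to |.|_p:
   nv is an absolute value on K extending |.|_p on Q (embedded via ratr),
   Q is dense in K and K is complete.  Any two such are isometrically
   isomorphic (uniqueness of completion). *)
Record is_Qp (p : nat) (R : realType) (K : fieldType) (nv : K -> R) : Prop := {
  Qp_norm_ge0 : forall x, 0 <= nv x;
  Qp_norm_eq0 : forall x, nv x = 0 -> x = 0;
  Qp_normM : forall x y, nv (x * y) = nv x * nv y;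
  Qp_normD : forall x y, nv (x + y) <= nv x + nv y;
  Qp_norm_rat : forall q : rat, nv (ratr q) = rat_padic_abs R p q;
  Qp_dense : forall (x : K) (e : R), 0 < e -> exists q : rat, nv (x - ratr q) < e;
  Qp_complete : forall u : nat -> K,
    (forall e : R, 0 < e -> exists N, forall m n, (N <= m)%N -> (N <= n)%N ->
       nv (u m - u n) < e) ->
    exists l : K, forall e : R, 0 < e -> exists N, forall n, (N <= n)%N ->
       nv (u n - l) < e
}.

Definition pball (R : realType) (K : fieldType) (nv : K -> R) (a : K) (r : R) : set K :=
  [set x | nv (x - a) <= r].

(* Main.v *)
Require Import Defs.
From HB Require Import structures.
From mathcomp Require Import all_boot all_order all_algebra.
From mathcomp Require Import boolp classical_sets reals.
From mathcomp Require Import ring lra.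
Local Open Scope classical_set_scope.
Import Order.TTheory GRing.Theory Num.Theory.
Local Open Scope ring_scope.
Set Implicit Arguments.

Lemma nv_nat p (R : realType) (K : fieldType) (nv : K -> R) :
  prime p -> is_Qp p nv -> forall n : nat, nv (n%:R) <= 1.
Proof.
move=> hp HK n; rewrite -(ratr_nat K n) (Qp_norm_rat HK) /rat_padic_abs.
case: eqP => // _.
have -> : (n%:R : rat) = (n%:Z)%:~R by rewrite pmulrn.
rewrite numq_int denq_int absz_nat /= logn1 sub0r -exprnN.
have p1 : (1 : R) <= p%:R by rewrite ler1n prime_gt0.
rewrite invf_le1; first exact: exprn_ege1.
by apply: exprn_gt0; apply: lt_le_trans p1.
Qed.

Lemma nv0 p (R : realType) (K : fieldType) (nv : K -> R) :
  is_Qp p nv -> nv 0 = 0.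
Proof.
move=> HK; have := Qp_norm_rat HK (0%:R); rewrite ratr_nat => ->.
by rewrite /rat_padic_abs eqxx.
Qed.

Lemma nv1 p (R : realType) (K : fieldType) (nv : K -> R) :
  is_Qp p nv -> nv 1 = 1.
Proof.
move=> HK; have h := Qp_normM HK 1 1; rewrite mulr1 in h.
have h0 : nv 1 != 0 by apply/eqP => /(Qp_norm_eq0 HK)/eqP; rewrite oner_eq0.
have := Qp_norm_ge0 HK 1. nra.
Qed.

Lemma nvN p (R : realType) (K : fieldType) (nv : K -> R) :
  is_Qp p nv -> forall x, nv (- x) = nv x.
Proof.
move=> HK x.
have h := Qp_normM HK (-1) (-1); rewrite mulrNN mulr1 (nv1 HK) in h.
have := Qp_norm_ge0 HK (-1) => h1.
have e : nv (-1) = 1 by nra.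
by rewrite -mulN1r (Qp_normM HK) e mul1r.
Qed.

Lemma nvX p (R : realType) (K : fieldType) (nv : K -> R) :
  is_Qp p nv -> forall x n, nv (x ^+ n) = nv x ^+ n.
Proof.
move=> HK x; elim=> [|n IH]; first by rewrite !expr0 (nv1 HK).
by rewrite !exprS (Qp_normM HK) IH.
Qed.

Lemma nv_sum p (R : realType) (K : fieldType) (nv : K -> R) :
  is_Qp p nv -> forall m (F : 'I_m -> K),
  nv (\sum_(i < m) F i) <= \sum_(i < m) nv (F i).
Proof.
move=> HK m F.
apply: (big_ind2 (fun a b => nv a <= b)).
- by rewrite (nv0 HK).
- move=> x1 x2 y1 y2 h1 h2; apply: le_trans (Qp_normD HK _ _) _; exact: lerD.
- by [].
Qed.

Lemma binom_lb (R : realType) (d : R) n : 0 <= d ->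
  2 + 2 * n%:R * d + n%:R * (n%:R - 1) * d ^+ 2 <= 2 * (1 + d) ^+ n.
Proof.
move=> d0; elim: n => [|n IH]; first by rewrite expr0 mulr0 !mul0r !addr0 mulr1.
have hn : 0 <= n%:R * (n%:R - 1) :> R.
  clear IH; case: n => [|k]; first by rewrite mul0r.
  rewrite -natr1 addrK; by apply: mulr_ge0 => //; rewrite natr1.
have hn0 : 0 <= n%:R :> R by [].
rewrite exprS -natr1.
have h3 : 0 <= n%:R * (n%:R - 1) * d ^+ 3 by rewrite mulr_ge0 // exprn_ge0.
have h4 : (2 + 2 * n%:R * d + n%:R * (n%:R - 1) * d ^+ 2) * (1 + d) <= 2 * (1 + d) ^+ n * (1 + d).
  by apply: ler_wpM2r => //; lra.
rewrite -[n.+1]addn1 natrD exprD expr1.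
move: h3 h4 hn hn0; rewrite !exprS !expr0 !mulr1.
move: (n%:R : R) ((1 + d) ^+ n) => m P.
move=> *; nra.
Qed.

Lemma growth (R : realType) (t M : R) : 0 <= M ->
  (forall n, t ^+ n <= (n.+1)%:R * M ^+ n) -> t <= M.
Proof.
move=> M0 h; rewrite leNgt; apply/negP => tM.
have [Me|Mn0] := eqVneq M 0.
  by have := h 1%N; rewrite Me !expr1 mulr0; move: tM; rewrite Me; lra.
have Mp : 0 < M by rewrite lt_neqAle eq_sym Mn0.
pose s := t / M; pose d := s - 1.
have s1 : 1 < s by rewrite /s ltr_pdivlMr // mul1r.
have d0 : 0 < d by rewrite /d subr_gt0.
have hs : forall n, s ^+ n <= n.+1%:R.
  move=> n; have := h n; rewrite /s exprMn exprVn ler_pdivrMr ?exprn_gt0 //.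
have hd2 : 0 < d ^+ 2 by exact: exprn_gt0.
pose x := 4 / d ^+ 2 + 1.
have x0 : 0 <= x by rewrite /x; apply: addr_ge0 => //; apply: divr_ge0 => //; exact: ltW.
set n := Num.Def.archi_bound x.
have hx := archi_boundP x0; rewrite -/n in hx.
have := @binom_lb R d n (ltW d0); have := hs n.
have e : 1 + d = s by rewrite /d addrC subrK.
rewrite e -natr1.
have : 4 < (n%:R - 1) * d ^+ 2.
  by rewrite -ltr_pdivrMr // ltrBrDr; move: hx; rewrite /x.
have hm0 : 0 <= n%:R :> R by [].
have hdd := ltW d0.
clearbody n; clear hx x0 x hs h.
move: hm0 hdd hd2; move: (n%:R : R) (s ^+ n) (d ^+ 2) => m S D.
move=> hm0 hdd hD h1 h2 h3.
have hm1 : 1 < m by nra.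
have h4 : 4 * m < m * (m - 1) * D by nra.
have h5 : 0 <= m * d by nra.
nra.
Qed.

Lemma lerX (R : realType) (u v : R) n : 0 <= u -> u <= v -> u ^+ n <= v ^+ n.
Proof.
move=> u0 uv; elim: n => [|n IH]; first by rewrite !expr0.
by rewrite !exprS; apply: ler_pM; rewrite ?exprn_ge0.
Qed.

Lemma ultra p (R : realType) (K : fieldType) (nv : K -> R) :
  is_Qp p nv -> prime p -> forall x y r, nv x <= r -> nv y <= r -> nv (x + y) <= r.
Proof.
move=> HK hp x y r hx hy.
have r0 : 0 <= r := le_trans (Qp_norm_ge0 HK x) hx.
apply: (@growth R (nv (x + y)) r r0) => n.
rewrite -(nvX HK) exprDn.
have hh := nv_sum HK (fun i : 'I_n.+1 => x ^+ (n - i) * y ^+ i *+ 'C(n, i)). apply: le_trans hh _.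
have -> : n.+1%:R * r ^+ n = \sum_(i < n.+1) r ^+ n.
  by rewrite sumr_const card_ord mulr_natl.
apply: ler_sum => i _.
rewrite -mulr_natr (Qp_normM HK).
have hC := nv_nat hp HK 'C(n, i).
have hC0 := Qp_norm_ge0 HK ('C(n, i)%:R).
have hz0 := Qp_norm_ge0 HK (x ^+ (n - i) * y ^+ i).
apply: le_trans (_ : nv (x ^+ (n - i) * y ^+ i) * 1 <= _).
  exact: ler_wpM2l.
rewrite mulr1 (Qp_normM HK) !(nvX HK).
have hi : (i <= n)%N by rewrite -ltnS ltn_ord.
have -> : r ^+ n = r ^+ (n - i) * r ^+ i by rewrite -exprD subnK.
apply: ler_pM; rewrite ?exprn_ge0 ?(Qp_norm_ge0 HK) //; by apply: lerX; rewrite ?(Qp_norm_ge0 HK).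
Qed.

Lemma ultra_lt p (R : realType) (K : fieldType) (nv : K -> R) :
  is_Qp p nv -> prime p -> forall x y, nv x < nv y -> nv (x + y) = nv y.
Proof.
move=> HK hp x y hxy; apply/eqP; rewrite eq_le; apply/andP; split.
  by apply: (ultra HK hp) => //; apply: ltW.
rewrite leNgt; apply/negP => h.
have : nv y <= Num.max (nv (x + y)) (nv x).
  have e : y = (x + y) + - x by rewrite addrC addKr.
  rewrite [X in nv X <= _]e.
  by apply: (ultra HK hp); rewrite ?(nvN HK) le_max ?lexx ?orbT.
rewrite le_max !leNgt h hxy. by [].
Qed.

Lemma nvV1 p (R : realType) (K : fieldType) (nv : K -> R) :
  is_Qp p nv -> forall z, nv z = 1 -> nv z^-1 = 1.
Proof.
move=> HK z hz.
have z0 : z != 0 by apply/eqP => e; move: hz; rewrite e (nv0 HK); apply/eqP; rewrite eq_sym oner_eq0.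
have := Qp_normM HK z z^-1; rewrite mulfV // (nv1 HK) hz mul1r. by [].
Qed.

Theorem lemma4p1 (p : nat) (R : realType) (K : fieldType) (nv : K -> R)
  (hp : prime p) (HK : is_Qp p nv) (b c : K)
  (hc : nv c = 1) (hb : nv b < 1)
  (a : K) (l : nat) (hl : (0 < l)%N)
  (hsub : pball nv a ((p%:R : R) ^- l) `<=` [set x | nv x = 1]) :
  (fun x => x / (b * x + c)) @` pball nv a ((p%:R : R) ^- l)
  = pball nv (a / (b * a + c)) ((p%:R : R) ^- l).
Proof.
set r := (p%:R : R) ^- l.
have p1 : (1 : R) < p%:R by rewrite ltr1n prime_gt1.
have r1 : r < 1.
  rewrite /r invf_lt1 ?exprn_gt0 //; last by apply: lt_trans p1.
  by rewrite (exprn_egte1 _).2 // -lt0n.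
have r0 : 0 <= r by rewrite /r invr_ge0 exprn_ge0 // ltW // (lt_trans _ p1).
have ha : nv a = 1.
  by apply: hsub; rewrite /pball /= subrr (nv0 HK).
have nz1 : forall z, nv z = 1 -> z != 0.
  by move=> z hz; apply/eqP => e; move: hz; rewrite e (nv0 HK); apply/eqP; rewrite eq_sym oner_eq0.
have key : forall x, nv x = 1 -> nv (b * x + c) = 1.
  move=> x hx; rewrite -hc; apply: (ultra_lt HK hp).
  by rewrite (Qp_normM HK) hx mulr1 hc.
have iso : forall x, nv x = 1 ->
    nv (x / (b * x + c) - a / (b * a + c)) = nv (x - a).
  move=> x hx.
  have d1 := nz1 _ (key x hx); have d2 := nz1 _ (key a ha).
  have -> : x / (b * x + c) - a / (b * a + c)
      = c * (x - a) * (b * x + c)^-1 * (b * a + c)^-1 by field; rewrite d1 d2.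
  by rewrite !(Qp_normM HK) hc !(nvV1 HK) ?key // mul1r !mulr1.
have nfa : nv (a / (b * a + c)) = 1.
  by rewrite (Qp_normM HK) ha (nvV1 HK) ?key // mulr1.
apply/seteqP; split => y.
  case=> x hx <-; rewrite /pball /= iso //; exact: hsub.
rewrite /pball /= => hy.
have ny : nv y = 1.
  have -> : y = (y - a / (b * a + c)) + a / (b * a + c) by rewrite subrK.
  by rewrite (ultra_lt HK hp) // nfa; apply: le_lt_trans hy r1.
have n1 : nv (1 - b * y) = 1.
  rewrite addrC (ultra_lt HK hp) ?(nv1 HK) //.
  by rewrite (nvN HK) (Qp_normM HK) ny mulr1.
have c0 := nz1 _ hc.
have e0 := nz1 _ n1.
set x := c * y / (1 - b * y).
have nx : nv x = 1 by rewrite /x !(Qp_normM HK) hc ny (nvV1 HK) // !mulr1.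
have fx : x / (b * x + c) = y.
  have ec : b * (c * y) + c * (1 - b * y) = c by ring.
  by rewrite /x; field; rewrite ec e0 c0.
exists x; last exact: fx.
by rewrite /pball /= -iso // fx.
Qed.
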